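(* Assume the setup and let $g\in\mathfrak{R}(R)$ be a root type element over a commutative ring $R$. Then: (1) $g_{\lambda,\mu}=0$ for all $\lambda,\mu\in\Lambda$ with $d(\lambda,\mu)\ge2$; (2) $g_{\lambda,\mu}=\pm g_{\rho,\tau}$ for all $\lambda,\mu,\rho,\tau\in\Lambda$ with $d(\lambda,\mu)=d(\rho,\tau)=1$ and $\lambda-\mu=\rho-\tau$ (the sign depending only on the weights).
   Context: Setup. Exactly one of the following cases (Bourbaki numbering): (a) $\Phi=D_l$, $l\ge5$, $V$ the half-spin representation with highest weight $\varpi_l$; (b) $\Phi=E_6$, $V$ with highest weight $\varpi_1$; (c) $\Phi=E_7$, $V$ with highest weight $\varpi_7$. $G(\Phi,R)$ is the Chevalley group of type $\Phi$ over $R$ whose weight lattice is generated by the weights of $V$; $x_\alpha(\xi)$ are root unipotents; $\Lambda$ is the set of weights of $V$ and elements of $G(\Phi,R)$ are matrices $(g_{\lambda,\mu})$ in a weight basis $\{v^\lambda\}$ with $x_\alpha(\xi)v^\lambda=v^\lambda\pm\xi v^{\lambda+\alpha}$ if $\lambda+\alpha\in\Lambda$, $=v^\lambda$ otherwise. $d(\lambda,\mu)$ is the distance in the weight graph on $\Lambda$ (weights adjacent iff their difference is a root). Root type elements: $\mathfrak{R}$ is the smallest closed subscheme (over $\mathbb{Z}$) of the group scheme $G(\Phi,-)$ such that $h\,x_{\alpha}(1)h^{-1}\in\mathfrak{R}(S)$ for every ring $S$, every $h\in G(\Phi,S)$ and a fixed root $\alpha$; $\mathfrak{R}(R)$ is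 its set of $R$-points. *)

(* Defs.v *)
From HB Require Import structures.
From mathcomp Require Import all_boot all_order all_algebra.
Set Implicit Arguments. Unset Strict Implicit. Unset Printing Implicit Defensive.
Import Order.TTheory GRing.Theory Num.Theory.
Local Open Scope ring_scope.

(* Euclidean vectors.  A vector is stored as its list of coordinates in      *)
(* Bourbaki's orthonormal basis e_1, e_2, ... MULTIPLIED BY 6 (so that all  *)
(* coordinates of roots and weights, which lie in (1/6)Z, become integers). *)
(* Roots have squared length 2, so <v, a^vee> = (v, a) = vdot v a / 36.     *)
Definition vec := seq int.
Definition vadd (u v : vec) : vec := [seq x.1 + x.2 | x <- zip u v].
Definition vscale (a : int) (v : vec) : vec := [seq a * x | x <- v].
Definition vsub (u v : vec) : vec := vadd u (vscale (-1) v).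
Definition vdot (u v : vec) : int := foldr (fun x acc => x.1 * x.2 + acc) 0 (zip u v).
Definition pairing (v a : vec) : int := (vdot v a %/ 36)%Z.
Definition vzero (len : nat) : vec := nseq len 0.
Definition unitv (len i : nat) : vec := mkseq (fun k => if k == i then 6 else 0) len.

(* all vectors of length k with entries +-1/2 (stored as +-3) *)
Fixpoint hvecs (k : nat) : seq vec :=
  if k is k'.+1 then [seq a :: v | a <- [:: 3; -3], v <- hvecs k']
  else [:: [::]].
Definition nneg (v : vec) : nat := count (fun x : int => x < 0) v.

(* +- e_i +- e_j, 0 <= i < j < m (0-indexed), inside R^len *)
Definition pmpairs (len m : nat) : seq vec :=
  flatten [seq flatten [seq
     [seq vadd (vscale a (unitv len i)) (vscale b (unitv len j))
        | a <- [:: 1; -1], b <- [:: 1; -1]]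
     | j <- iota i.+1 (m - i.+1)] | i <- iota 0 m].

Definition refl (a v : vec) : vec := vsub v (vscale (pairing v a) a).
Definition orbit_step (R : seq vec) (S : seq vec) : seq vec :=
  undup (S ++ [seq refl a v | v <- S, a <- R]).
Definition worbit (R : seq vec) (w : vec) (fuel : nat) : seq vec :=
  iter fuel (orbit_step R) [:: w].

(* The three cases (Bourbaki plates IV, V, VI).                             *)
Inductive case := CaseD of nat | CaseE6 | CaseE7.

(* D_l with l >= 5, half-spin representation, highest weight varpi_l *)
Definition case_ok (c : case) : bool :=
  if c is CaseD l then (5 <= l)%N else true.

Definition rootsE6 : seq vec :=
  pmpairs 8 5 ++
  flatten [seq [:: v ++ [:: -3; -3; 3];
                   vscale (-1) (v ++ [:: -3; -3; 3])]
          | v <- hvecs 5 & ~~ odd (nneg v)].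
Definition rootsE7 : seq vec :=
  pmpairs 8 6 ++ [:: vsub (unitv 8 6) (unitv 8 7); vsub (unitv 8 7) (unitv 8 6)] ++
  flatten [seq [:: v ++ [:: 3; -3];
                   vscale (-1) (v ++ [:: 3; -3])]
          | v <- hvecs 6 & odd (nneg v)].

Definition Phi (c : case) : seq vec :=
  match c with
  | CaseD l => pmpairs l l
  | CaseE6 => rootsE6
  | CaseE7 => rootsE7
  end.

(* highest weights: varpi_1 = 2/3 (e8 - e7 - e6) for E6,
   varpi_7 = e6 + 1/2 (e8 - e7) for E7 *)
Definition varpiE6 : vec := [:: 0; 0; 0; 0; 0; -4; -4; 4].
Definition varpiE7 : vec := [:: 0; 0; 0; 0; 0; 6; -3; 3].

(* the set Lambda of weights of V (all of multiplicity one: V is minuscule).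
   E6, E7: the Weyl orbit of the highest weight, computed as the closure of
   {varpi} under the reflections s_a, a in Phi (the weight graph has diameter
   2 resp. 3, so 3 resp. 4 closure steps reach the whole orbit, of size 27
   resp. 56). *)
Definition weights (c : case) : seq vec :=
  match c with
  | CaseD l => [seq v <- hvecs l | ~~ odd (nneg v)]
  | CaseE6 => worbit rootsE6 varpiE6 3
  | CaseE7 => worbit rootsE7 varpiE7 4
  end.

Definition dimV (c : case) : nat := size (weights c).
Definition wt (c : case) (i : 'I_(dimV c)) : vec := nth [::] (weights c) i.

Definition wadj (c : case) (i j : 'I_(dimV c)) : bool :=
  vsub (wt i) (wt j) \in Phi c.
Fixpoint within (c : case) (k : nat) (i j : 'I_(dimV c)) : bool :=
  if k is k'.+1 then within k' i j || [exists m, within k' i m && wadj m j]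
  else i == j.
(* d(i, j) = least k with a path of length k (dimV c if none) *)
Definition wdist (c : case) (i j : 'I_(dimV c)) : nat :=
  find (fun k => within k i j) (iota 0 (dimV c)).

(* A sign system eps: e_a v^mu = (eps a mu) v^(mu+a) if mu + a is a weight, *)
(* and 0 otherwise; the column mu of a matrix is the image of v^mu.         *)
Definition signs (c : case) := vec -> 'I_(dimV c) -> bool.

Definition emat (c : case) (eps : signs c) (R : pzRingType) (a : vec)
  : 'M[R]_(dimV c) :=
  \matrix_(i, j) (if wt i == vadd (wt j) a then (if eps a j then 1 else -1)
                  else 0).

Definition xroot (c : case) (eps : signs c) (R : pzRingType) (a : vec) (xi : R)
  : 'M[R]_(dimV c) := 1%:M + xi *: emat eps R a.

(* eps comes from a Chevalley basis of the Lie algebra acting on the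
   admissible lattice of V: the e_a satisfy the Chevalley commutation
   relations [e_a, e_b] = +- e_(a+b) (a+b root), 0 (a+b not a root, nonzero),
   and [e_a, e_-a] = h_a acting on v^mu by <mu, a^vee>. *)
Definition chevalley_signs (c : case) (eps : signs c) : Prop :=
  forall a b : vec, a \in Phi c -> b \in Phi c ->
    let C := emat eps rat a *m emat eps rat b - emat eps rat b *m emat eps rat a in
    if vadd a b \in Phi c then
      C = emat eps rat (vadd a b) \/ C = - emat eps rat (vadd a b)
    else if vadd a b == vzero (size a) then
      C = \matrix_(i, j) (if i == j then (pairing (wt i) a)%:~R else 0)
    else C = 0.

Inductive zpoly (n : nat) : Type :=
| ZVar of 'I_n & 'I_n
| ZConst of int
| ZAdd of zpoly n & zpoly n
| ZMul of zpoly n & zpoly n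
| ZOpp of zpoly n.

Fixpoint zeval (n : nat) (R : pzRingType) (f : zpoly n) (g : 'M[R]_n) : R :=
  match f with
  | ZVar i j => g i j
  | ZConst z => z%:~R
  | ZAdd f1 f2 => zeval f1 g + zeval f2 g
  | ZMul f1 f2 => zeval f1 g * zeval f2 g
  | ZOpp f1 => - zeval f1 g
  end.

Inductive elem (c : case) (eps : signs c) (S : comPzRingType)
  : 'M[S]_(dimV c) -> Prop :=
| elem1 : elem eps 1%:M
| elemM g a xi : elem eps g -> a \in Phi c ->
                 elem eps (g *m xroot eps a (xi : S)).

Definition invertible (n : nat) (S : pzRingType) (g : 'M[S]_n) : Prop :=
  exists h : 'M[S]_n, g *m h = 1%:M /\ h *m g = 1%:M.

(* The Chevalley group scheme G(Phi, -) in GL(V): the closed subscheme of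
   GL(V) cut out by the integer polynomials vanishing on E(Phi, S) for all
   commutative rings S (its Zariski closure; this is the Chevalley-Demazure
   group scheme whose weight lattice is generated by the weights of V). *)
Definition inG (c : case) (eps : signs c) (R : comPzRingType)
  (g : 'M[R]_(dimV c)) : Prop :=
  invertible g /\
  forall f : zpoly (dimV c),
    (forall (S : comPzRingType) (h : 'M[S]_(dimV c)), elem eps h -> zeval f h = 0) ->
    zeval f g = 0.

(* Root type elements: R-points of the smallest closed subscheme of G
   containing h x_a(1) h^-1 for all rings S and h in G(S). *)
Definition root_type (c : case) (eps : signs c) (a : vec) (R : comPzRingType)
  (g : 'M[R]_(dimV c)) : Prop :=
  inG eps g /\
  forall f : zpoly (dimV c),
    (forall (S : comPzRingType) (h h' : 'M[S]_(dimV c)),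
        inG eps h -> h *m h' = 1%:M -> h' *m h = 1%:M ->
        zeval f (h *m xroot eps a (1 : S) *m h') = 0) ->
    zeval f g = 0.

(* Main.v *)
Require Import Defs.
From HB Require Import structures.
From mathcomp Require Import all_boot all_order all_algebra.
From mathcomp Require Import fingroup perm.
From mathcomp Require Import zify ring.
Import Order.TTheory GRing.Theory Num.Theory.
Local Open Scope ring_scope.

Lemma vadd_cons x u y v : vadd (x::u) (y::v) = (x+y) :: vadd u v. Proof. by []. Qed.
Lemma vscale_cons k x u : vscale k (x::u) = (k*x) :: vscale k u. Proof. by []. Qed.
Lemma vsub_cons x u y v : vsub (x::u) (y::v) = (x + -1*y) :: vsub u v. Proof. by []. Qed.
Lemma vdot_cons x u y v : vdot (x::u) (y::v) = x*y + vdot u v. Proof. by []. Qed.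
Lemma vdot_nill v : vdot [::] v = 0. Proof. by case: v => [|? ?]. Qed.
Lemma vdot_nilr v : vdot v [::] = 0. Proof. by case: v => [|? ?]. Qed.
Lemma size_vadd u v : size (vadd u v) = minn (size u) (size v).
Proof. by rewrite size_map size_zip. Qed.
Lemma size_vscale k u : size (vscale k u) = size u. Proof. by rewrite size_map. Qed.
Lemma size_vsub u v : size (vsub u v) = minn (size u) (size v).
Proof. by rewrite size_vadd size_vscale. Qed.

Lemma vdotC u v : vdot u v = vdot v u.
Proof. by elim: u v => [|x u IH] [|y v]; rewrite ?vdot_nill ?vdot_nilr // !vdot_cons IH mulrC. Qed.

Lemma vdotDl u v w : size u = size v -> vdot (vadd u v) w = vdot u w + vdot v w.
Proof.
elim: u v w => [|x u IH] [|y v] [|z w] //= [Hs]; rewrite ?vdot_nill ?vdot_nilr ?addr0 //.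
by rewrite vadd_cons !vdot_cons IH // mulrDl addrACA.
Qed.
Lemma vdotZl k u w : vdot (vscale k u) w = k * vdot u w.
Proof.
elim: u w => [|x u IH] [|z w]; rewrite ?vdot_nill ?vdot_nilr ?mulr0 //.
by rewrite vscale_cons !vdot_cons IH mulrDr mulrA.
Qed.
Lemma vdotBl u v w : size u = size v -> vdot (vsub u v) w = vdot u w - vdot v w.
Proof.
by move=> H; rewrite /vsub vdotDl ?size_vscale // vdotZl mulN1r.
Qed.
Lemma vdotDr u v w : size u = size v -> vdot w (vadd u v) = vdot w u + vdot w v.
Proof. by move=> H; rewrite !(vdotC w) vdotDl. Qed.
Lemma vdotZr k u w : vdot w (vscale k u) = k * vdot w u.
Proof. by rewrite !(vdotC w) vdotZl. Qed.

Lemma vdot_ge0 v : 0 <= vdot v v.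
Proof. by elim: v => [|x v IH] //=; rewrite vdot_cons addr_ge0 // -expr2 sqr_ge0. Qed.

Lemma vdot_eq0 v : vdot v v = 0 -> v = vzero (size v).
Proof.
elim: v => [|x v IH] //=; rewrite vdot_cons => /eqP.
rewrite paddr_eq0 ?vdot_ge0 -?expr2 ?sqr_ge0 // => /andP[].
by rewrite sqrf_eq0 => /eqP -> /eqP /IH {1}->.
Qed.

Lemma vsub_eq u v a : size u = size v -> size v = size a ->
  (u == vadd v a) = (vsub u v == a).
Proof.
elim: u v a => [|x u IH] [|y v] [|z a] //= [Hs] [Hs'].
rewrite vsub_cons vadd_cons !eqseq_cons IH //; congr andb.
by apply/eqP/eqP => [->|<-]; ring.
Qed.

Lemma vsub_self u : vsub u u = vzero (size u).
Proof. elim: u => [|x u IH] //=; rewrite vsub_cons IH /=; congr cons; ring. Qed.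

Lemma vdot_unit w s i : vdot w [seq (if k == i then 6 else 0 : int) | k <- iota s (size w)]
   = if (s <= i < s + size w)%N then 6 * nth 0 w (i - s) else 0.
Proof.
elim: w s => [|x w IH] s /=; first by rewrite addn0; case: ltnP => //; rewrite ltnNge => ->.
rewrite vdot_cons IH; case: (ltngtP s i) => H /=.
- rewrite mulr0 add0r addSn addnS.
  have -> : (i - s = (i - s.+1).+1)%N by lia.
  by [].
- by rewrite mulr0 add0r.
- subst; rewrite subnn addnS ltnS leq_addr /= addr0 mulrC.
  by [].
Qed.

Lemma vdotBr u v w : size u = size v -> vdot w (vsub u v) = vdot w u - vdot w v.
Proof. by move=> H; rewrite !(vdotC w) vdotBl. Qed.

Lemma pairing36 w a : vdot w a \in [:: -36; 0; 36] -> vdot w a = pairing w a * 36.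
Proof. by rewrite /pairing !inE => /or3P[] /eqP ->. Qed.

Definition Rok (R : seq vec) : bool := all (fun a => (size a == 8%N) && (vdot a a == 72)
  && all (fun b => (36 %| vdot a b)%Z && (refl a b \in R)) R) R.
Lemma r6 : Rok rootsE6. Proof. vm_compute. reflexivity. Qed.
Lemma r7 : Rok rootsE7. Proof. vm_compute. reflexivity. Qed.

Definition wok (R : seq vec) (w : vec) : bool :=
  (size w == 8%N) && all (fun a => vdot w a \in [:: -36; 0; 36]) R.

Lemma wok_refl R a w : Rok R -> a \in R -> wok R w -> wok R (refl a w).
Proof.
move=> /allP HR aR /andP[/eqP sw /allP Hw].
have /andP[/andP[/eqP sa _] /allP Ha] := HR a aR.
apply/andP; split.
  by rewrite /refl size_vsub size_vscale sw sa.
apply/allP => b bR.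
have /andP[/eqP sb _] := (andP (HR b bR)).1.
have /andP[dab rab] := Ha b bR.
have := Hw _ rab.
rewrite /refl vdotBr ?size_vscale ?sb ?sa // vdotZr.
rewrite vdotBl ?size_vscale ?sw ?sa // vdotZl.
have e1 : vdot w a = pairing w a * 36 by apply: pairing36; apply: Hw.
have e2 : vdot a b = pairing b a * 36.
  by rewrite vdotC /pairing divzK // vdotC.
rewrite e1 e2; have -> : pairing w a * (pairing b a * 36) = pairing b a * (pairing w a * 36) by rewrite mulrCA. done.
Qed.

Lemma wok_orbit R w0 k : Rok R -> wok R w0 -> forall w, w \in worbit R w0 k -> wok R w.
Proof.
move=> HR H0; elim: k => [|k IH] w /=.
  by rewrite inE => /eqP ->.
rewrite /orbit_step mem_undup mem_cat => /orP[/IH //|].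
case/allpairsPdep => v [a [vS aR ->]].
by apply: wok_refl => //; apply: IH.
Qed.

Lemma hvecs_mem k w : w \in hvecs k -> size w = k /\ all (fun x => x \in [:: 3; -3]) w.
Proof.
elim: k w => [|k IH] w /=; first by rewrite inE => /eqP ->.
rewrite !mem_cat in_nil orbF => /orP[] /mapP[v vin ->];
  by have [<- Hv] := IH _ vin; rewrite /= Hv.
Qed.

Definition unitv' (len i : nat) := unitv len i.

Lemma nth_vadd u v k : size u = size v -> nth 0 (vadd u v) k = nth 0 u k + nth 0 v k.
Proof.
elim: u v k => [|x u IH] [|y v] [|k] // [H]; rewrite ?nth_nil ?addr0 //.
by rewrite vadd_cons /= IH.
Qed.
Lemma nth_vscale a u k : nth 0 (vscale a u) k = a * nth 0 u k.
Proof.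
elim: u k => [|x u IH] [|k] //=; rewrite ?mulr0 //.
Qed.
Lemma size_unitv l i : size (unitv l i) = l. Proof. by rewrite size_mkseq. Qed.
Lemma nth_unitv l i k : (k < l)%N -> nth 0 (unitv l i) k = if k == i then 6 else 0.
Proof. by move=> H; rewrite nth_mkseq. Qed.
Lemma vdot_unitv w i : (i < size w)%N -> vdot w (unitv (size w) i) = 6 * nth 0 w i.
Proof. by move=> H; rewrite /unitv /mkseq vdot_unit /= H subn0. Qed.

Lemma pmpairs_mem l v : v \in pmpairs l l -> exists i j a b,
  [/\ (i < j < l)%N, a \in [:: 1; -1], b \in [:: 1; -1] &
      v = vadd (vscale a (unitv l i)) (vscale b (unitv l j))].
Proof.
case/flattenP => s /mapP[i]; rewrite mem_iota add0n => /andP[_ il] ->.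
case/flattenP => s' /mapP[j]; rewrite mem_iota => /andP[ij jl] ->.
case/allpairsPdep => a [b [ain bin ->]].
exists i, j, a, b; split => //.
by rewrite ij /=; move: jl; rewrite subnKC.
Qed.

Definition Nc (c : case) : nat := if c is CaseD l then l else 8%N.

Lemma pm_dot l i j a b w : (i < j < l)%N -> size w = l ->
  vdot w (vadd (vscale a (unitv l i)) (vscale b (unitv l j))) =
  a * (6 * nth 0 w i) + b * (6 * nth 0 w j).
Proof.
move=> /andP[ij jl] sw.
rewrite vdotDr ?size_vscale ?size_unitv // !vdotZr -sw !vdot_unitv //; rewrite sw //.
exact: ltn_trans ij jl.
Qed.

Lemma roots_facts c : case_ok c -> forall a, a \in Phi c -> size a = Nc c /\ vdot a a = 72.
Proof.
case: c => [l||] /= _ v.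
- case/pmpairs_mem => i [j [a [b [ijl ain bin ->]]]].
  have sz : size (vadd (vscale a (unitv l i)) (vscale b (unitv l j))) = l.
    by rewrite size_vadd !size_vscale !size_unitv minnn.
  split => //; rewrite pm_dot //.
  move: (ijl) => /andP[ij jl].
  have il := ltn_trans ij jl.
  rewrite !nth_vadd ?size_vscale ?size_unitv // !nth_vscale !nth_unitv //.
  rewrite !eqxx (ltn_eqF ij) (gtn_eqF ij).
  by move: ain bin; rewrite !inE => /orP[]/eqP-> /orP[]/eqP->.
- by move=> H; have /allP /(_ v H) /andP[/andP[/eqP -> /eqP ->] _] := r6.
- by move=> H; have /allP /(_ v H) /andP[/andP[/eqP -> /eqP ->] _] := r7.
Qed.

Lemma weights_facts c : case_ok c -> forall w, w \in weights c ->
  size w = Nc c /\ forall a, a \in Phi c -> vdot w a \in [:: -36; 0; 36].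
Proof.
case: c => [l||] /= _ w.
- rewrite mem_filter => /andP[_ /hvecs_mem [sw /allP Hw]].
  split => // v /pmpairs_mem [i [j [a [b [ijl ain bin ->]]]]].
  rewrite pm_dot //.
  move: (ijl) => /andP[ij jl].
  have il := ltn_trans ij jl.
  have := Hw _ (mem_nth 0 (_ : (i < size w)%N)); rewrite sw => /(_ il).
  have := Hw _ (mem_nth 0 (_ : (j < size w)%N)); rewrite sw => /(_ jl).
  by move: ain bin; rewrite !inE => /orP[]/eqP-> /orP[]/eqP-> /orP[]/eqP-> /orP[]/eqP->.
- move=> H; have W : wok rootsE6 varpiE6 by vm_compute.
  have := wok_orbit rootsE6 varpiE6 3 r6 W w H; rewrite /wok => /andP[/eqP -> /allP Hw].
  by split.
- move=> H; have W : wok rootsE7 varpiE7 by vm_compute.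
  have := wok_orbit rootsE7 varpiE7 4 r7 W w H; rewrite /wok => /andP[/eqP -> /allP Hw].
  by split.
Qed.

Set Implicit Arguments. Unset Strict Implicit.

Lemma wt_mem c (i : 'I_(dimV c)) : wt i \in weights c.
Proof. by rewrite /wt mem_nth. Qed.

Lemma wt_size c (Hc : case_ok c) (i : 'I_(dimV c)) : size (wt i) = Nc c.
Proof. exact: (weights_facts _ Hc _ (wt_mem i)).1. Qed.
Lemma wt_dot c (Hc : case_ok c) (i : 'I_(dimV c)) a : a \in Phi c ->
  vdot (wt i) a \in [:: -36; 0; 36].
Proof. exact: (weights_facts _ Hc _ (wt_mem i)).2. Qed.
Lemma root_size c (Hc : case_ok c) a : a \in Phi c -> size a = Nc c.
Proof. by move=> H; exact: (roots_facts _ Hc _ H).1. Qed.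
Lemma root_dot c (Hc : case_ok c) a : a \in Phi c -> vdot a a = 72.
Proof. by move=> H; exact: (roots_facts _ Hc _ H).2. Qed.

Lemma emat_E c (eps : signs c) (S : pzRingType) a i j :
  emat eps S a i j = if wt i == vadd (wt j) a then (if eps a j then 1 else -1) else 0.
Proof. by rewrite mxE. Qed.

Lemma shift_dot c (Hc : case_ok c) (i j : 'I_(dimV c)) a b : a \in Phi c ->
  wt i = vadd (wt j) a -> vdot (wt i) b = vdot (wt j) b + vdot a b.
Proof. by move=> aR ->; rewrite vdotDl // (wt_size Hc) (root_size Hc). Qed.

Lemma up_lo c (Hc : case_ok c) (i j : 'I_(dimV c)) a : a \in Phi c ->
  wt i = vadd (wt j) a -> vdot (wt j) a = -36 /\ vdot (wt i) a = 36.
Proof.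
move=> aR H; have e := shift_dot Hc a aR H; rewrite (root_dot Hc aR) in e.
have := wt_dot Hc i aR; have := wt_dot Hc j aR; rewrite e !inE.
by move=> /or3P[]/eqP-> /or3P[]/eqP E; split => //; move: E.
Qed.

Lemma vzero_notin c (Hc : case_ok c) : vzero (Nc c) \notin Phi c.
Proof.
apply/negP => H; have := root_dot Hc H.
by rewrite /vzero; elim: (Nc c) => [|k IH] //=; rewrite vdot_cons mul0r add0r.
Qed.

Lemma vsub_wt c (Hc : case_ok c) (i j : 'I_(dimV c)) a : a \in Phi c ->
  (wt i == vadd (wt j) a) = (vsub (wt i) (wt j) == a).
Proof. by move=> aR; rewrite vsub_eq // ?(wt_size Hc) ?(root_size Hc aR). Qed.

Lemma EE0 c (Hc : case_ok c) (eps : signs c) (S : pzRingType) b i k j : b \in Phi c ->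
  emat eps S b i k * emat eps S b k j = 0.
Proof.
move=> bR; rewrite !emat_E.
case: eqP => H1; last by rewrite mul0r.
case: eqP => H2; last by rewrite mulr0.
have := (up_lo Hc bR H1).1; have := (up_lo Hc bR H2).2; by move=> ->.
Qed.

Lemma EEmul0 c (Hc : case_ok c) (eps : signs c) (S : pzRingType) b : b \in Phi c ->
  emat eps S b *m emat eps S b = 0.
Proof.
move=> bR; apply/matrixP => i j; rewrite !mxE big1 // => k _.
by apply: EE0.
Qed.

Lemma EAE0 c (Hc : case_ok c) (eps : signs c) (S : pzRingType) a b :
  a \in Phi c -> b \in Phi c -> vadd b a != vzero (Nc c) ->
  emat eps S b *m emat eps S a *m emat eps S b = 0.
Proof.
move=> aR bR Hne; apply/matrixP => i j; rewrite !mxE big1 // => l _.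
rewrite !mxE mulr_suml big1 // => k _.
rewrite !emat_E.
case: eqP => H1; last by rewrite !mul0r.
case: eqP => H2; last by rewrite mulr0 mul0r.
case: eqP => H3; last by rewrite mulr0.
exfalso; move/negP: Hne; apply.
have e1 := (up_lo Hc bR H1).1; have e3 := (up_lo Hc bR H3).2.
have e2 := shift_dot Hc b aR H2; rewrite e1 e3 in e2.
have eab : vdot a b = -72 by lia.
have sz : size (vadd b a) = Nc c by rewrite size_vadd !(root_size Hc) // minnn.
have : vdot (vadd b a) (vadd b a) = 0.
  rewrite vdotDl ?(root_size Hc) // !vdotDr ?(root_size Hc) //.
  by rewrite (root_dot Hc aR) (root_dot Hc bR) eab vdotC eab.
by move/vdot_eq0; rewrite sz => ->.
Qed.

Lemma emat_map c (eps : signs c) (S : pzRingType) a :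
  emat eps S a = map_mx (intmul (1:S)) (emat eps int a).
Proof.
apply/matrixP => i j; rewrite !mxE.
by case: (_ == _); case: (eps a j).
Qed.

Lemma map_int_inj n (A B : 'M[int]_n) :
  map_mx (intmul (1:rat)) A = map_mx (intmul (1:rat)) B -> A = B.
Proof.
move/matrixP => H; apply/matrixP => i j; have := H i j; rewrite !mxE.
exact: intr_inj.
Qed.

Definition Hd c (S : pzRingType) a : 'M[S]_(dimV c) :=
  \matrix_(i, j) (if i == j then (pairing (wt i) a)%:~R else 0).

Lemma Hd_map c (S : pzRingType) a :
  Hd c S a = map_mx (intmul (1:S)) (Hd c int a).
Proof. by apply/matrixP => i j; rewrite /Hd !mxE intz; case: eqP. Qed.

Lemma chev_S c (eps : signs c) (Hch : chevalley_signs eps) (S : pzRingType) a b :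
  a \in Phi c -> b \in Phi c ->
  let C := emat eps S a *m emat eps S b - emat eps S b *m emat eps S a in
  if vadd a b \in Phi c then
    C = emat eps S (vadd a b) \/ C = - emat eps S (vadd a b)
  else if vadd a b == vzero (size a) then C = Hd c S a
  else C = 0.
Proof.
move=> aR bR /=.
have := Hch a b aR bR; rewrite /=.
set Ci := emat eps int a *m emat eps int b - emat eps int b *m emat eps int a.
have mC : forall T : pzRingType, emat eps T a *m emat eps T b - emat eps T b *m emat eps T a
   = map_mx (intmul (1:T)) Ci.
  by move=> T; rewrite /Ci map_mxB !map_mxM -!emat_map.
rewrite !mC.
case: ifP => _.
  case=> H; [left|right]; rewrite (emat_map eps rat) in H.
    by rewrite (map_int_inj H) -emat_map.
  have H' : map_mx (intmul (1:rat)) Ci = map_mx (intmul (1:rat)) (- emat eps int (vadd a b)).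
    by rewrite H map_mxN.
  by rewrite (map_int_inj H') map_mxN -emat_map.
case: ifP => _.
  have -> : (\matrix_(i, j) (if i == j then (pairing (wt i) a)%:~R else 0) : 'M[rat]_(dimV c))
     = map_mx (intmul (1:rat)) (Hd c int a) by rewrite -Hd_map.
  by move=> H; rewrite (map_int_inj H) -Hd_map.
have -> : (0 : 'M[rat]_(dimV c)) = map_mx (intmul (1:rat)) 0 by rewrite map_mx0.
by move=> H; rewrite (map_int_inj H) map_mx0.
Qed.

Definition Dg c (S : pzRingType) (d : 'I_(dimV c) -> S) : 'M[S]_(dimV c) :=
  \matrix_(i, j) (if i == j then d i else 0).

Definition Qm c (eps : signs c) (S : comPzRingType) (X : 'M[S]_(dimV c)) : Prop :=
  exists (cf : vec -> S) (d : 'I_(dimV c) -> S) (psi : vec -> S),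
    (forall i j, vsub (wt i) (wt j) \in Phi c -> d i - d j = psi (vsub (wt i) (wt j))) /\
    X = \sum_(a <- undup (Phi c)) cf a *: emat eps S a + Dg d.

Lemma Dg0 c (S : pzRingType) : Dg (fun _ : 'I_(dimV c) => 0 : S) = 0.
Proof. by apply/matrixP => i j; rewrite !mxE; case: eqP. Qed.

Lemma Q0 c (eps : signs c) (S : comPzRingType) : Qm eps (0 : 'M[S]_(dimV c)).
Proof.
exists (fun _ => 0), (fun _ => 0), (fun _ => 0); split; first by move=> *; rewrite subr0.
by rewrite Dg0 addr0 big1 // => a _; rewrite scale0r.
Qed.

Lemma QD c (eps : signs c) (S : comPzRingType) (X Y : 'M[S]_(dimV c)) :
  Qm eps X -> Qm eps Y -> Qm eps (X + Y).
Proof.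
move=> [cf1 [d1 [p1 [H1 ->]]]] [cf2 [d2 [p2 [H2 ->]]]].
exists (fun a => cf1 a + cf2 a), (fun i => d1 i + d2 i), (fun v => p1 v + p2 v); split.
  by move=> i j H; rewrite -H1 // -H2 // opprD addrACA.
have -> : Dg (fun i => d1 i + d2 i) = Dg d1 + Dg d2.
  by apply/matrixP => i j; rewrite !mxE; case: eqP; rewrite ?addr0.
have -> : \sum_(a <- undup (Phi c)) (cf1 a + cf2 a) *: emat eps S a =
  \sum_(a <- undup (Phi c)) cf1 a *: emat eps S a + \sum_(a <- undup (Phi c)) cf2 a *: emat eps S a.
  by rewrite -big_split; apply: eq_bigr => a _; rewrite scalerDl.
by rewrite addrACA.
Qed.

Lemma QZ c (eps : signs c) (S : comPzRingType) (k : S) (X : 'M[S]_(dimV c)) :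
  Qm eps X -> Qm eps (k *: X).
Proof.
move=> [cf [d [p [H ->]]]].
exists (fun a => k * cf a), (fun i => k * d i), (fun v => k * p v); split.
  by move=> i j Hij; rewrite -mulrBr H.
have -> : Dg (fun i => k * d i) = k *: Dg d.
  by apply/matrixP => i j; rewrite !mxE; case: eqP; rewrite ?mulr0.
by rewrite scalerDr scaler_sumr; congr (_ + _); apply: eq_bigr => a _; rewrite scalerA.
Qed.

Lemma QN c (eps : signs c) (S : comPzRingType) (X : 'M[S]_(dimV c)) :
  Qm eps X -> Qm eps (- X).
Proof. by move=> H; rewrite -scaleN1r; apply: QZ. Qed.

Lemma QB c (eps : signs c) (S : comPzRingType) (X Y : 'M[S]_(dimV c)) :
  Qm eps X -> Qm eps Y -> Qm eps (X - Y).
Proof. by move=> HX HY; apply: QD => //; apply: QN. Qed.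

Lemma QE c (eps : signs c) (S : comPzRingType) a : a \in Phi c -> Qm eps (emat eps S a).
Proof.
move=> aR.
exists (fun v => if v == a then 1 else 0), (fun _ => 0), (fun _ => 0); split.
  by move=> *; rewrite subr0.
rewrite Dg0 addr0 (bigD1_seq a) ?mem_undup ?undup_uniq //= eqxx scale1r big1 ?addr0 //.
by move=> v /negbTE ->; rewrite scale0r.
Qed.

Lemma QDg c (eps : signs c) (S : comPzRingType) (d : 'I_(dimV c) -> S) psi :
  (forall i j, vsub (wt i) (wt j) \in Phi c -> d i - d j = psi (vsub (wt i) (wt j))) ->
  Qm eps (Dg d).
Proof.
move=> H; exists (fun _ => 0), d, psi; split => //.
by rewrite big1 ?add0r // => a _; rewrite scale0r.
Qed.

Lemma QH c (Hc : case_ok c) (eps : signs c) (S : comPzRingType) b : b \in Phi c ->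
  Qm eps (Hd c S b).
Proof.
move=> bR.
have -> : Hd c S b = Dg (fun i => (pairing (wt i) b)%:~R) by [].
apply: (@QDg c eps S _ (fun v : vec => ((vdot v b %/ 36)%Z)%:~R : S)) => i j Hij.
rewrite vdotBl ?(wt_size Hc) // -rmorphB /=; congr (_%:~R).
rewrite (pairing36 _ _ (wt_dot Hc i bR)) (pairing36 _ _ (wt_dot Hc j bR)) -mulrBl mulzK //.
Qed.

Definition Ad c (eps : signs c) (S : pzRingType) b (t : S) (X : 'M[S]_(dimV c)) :=
  xroot eps b t *m X *m xroot eps b (-t).

Lemma Ad_expand c (eps : signs c) (S : comPzRingType) b (t : S) (X : 'M[S]_(dimV c)) :
  Ad eps b t X = X + t *: (emat eps S b *m X - X *m emat eps S b)
                   - (t * t) *: (emat eps S b *m X *m emat eps S b).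
Proof.
rewrite /Ad /xroot mulmxDl mul1mx -scalemxAl mulmxDr mulmx1 -scalemxAr mulmxDl -scalemxAl.
by rewrite scalerBr !scaleNr scalerDr scalerA opprD !addrA.
Qed.

Lemma Ad_add c (eps : signs c) (S : comPzRingType) b (t : S) (X Y : 'M[S]_(dimV c)) :
  Ad eps b t (X + Y) = Ad eps b t X + Ad eps b t Y.
Proof. by rewrite /Ad [xroot eps b t *m _]mulmxDr mulmxDl. Qed.

Lemma Ad_scale c (eps : signs c) (S : comPzRingType) b (t : S) k (X : 'M[S]_(dimV c)) :
  Ad eps b t (k *: X) = k *: Ad eps b t X.
Proof. by rewrite /Ad -scalemxAr -scalemxAl. Qed.

Lemma Ad0 c (eps : signs c) (S : comPzRingType) b (t : S) :
  Ad eps b t (0 : 'M[S]_(dimV c)) = 0.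
Proof. by rewrite /Ad mulmx0 mul0mx. Qed.

Lemma mulDg_r c (S : pzRingType) (A : 'M[S]_(dimV c)) d i j :
  (A *m Dg d) i j = A i j * d j.
Proof.
rewrite !mxE (bigD1 j) //= big1 => [|k /negbTE kj]; rewrite !mxE ?eqxx ?addr0 //.
by rewrite kj mulr0.
Qed.

Lemma mulDg_l c (S : pzRingType) (A : 'M[S]_(dimV c)) d i j :
  (Dg d *m A) i j = d i * A i j.
Proof.
rewrite !mxE (bigD1 i) //= big1 => [|k /negbTE kj]; rewrite !mxE ?eqxx ?addr0 //.
by rewrite eq_sym kj mul0r.
Qed.

Lemma E_H c (Hc : case_ok c) (eps : signs c) (S : pzRingType) b : b \in Phi c ->
  emat eps S b *m Hd c S b = - emat eps S b.
Proof.
move=> bR; apply/matrixP => i j.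
have -> : Hd c S b = Dg (fun i => (pairing (wt i) b)%:~R) by [].
rewrite mulDg_r [RHS]mxE emat_E; case: eqP => H; last by rewrite mul0r oppr0.
have e := (up_lo Hc bR H).1; rewrite /pairing e.
by rewrite mulrN1.
Qed.

Lemma QAdE c (Hc : case_ok c) (eps : signs c) (Hch : chevalley_signs eps)
  (S : comPzRingType) a b (t : S) : a \in Phi c -> b \in Phi c ->
  Qm eps (Ad eps b t (emat eps S a)).
Proof.
move=> aR bR; rewrite Ad_expand.
have := chev_S Hch S bR aR; rewrite /=.
case: ifP => Hin.
  move=> HC.
  rewrite (EAE0 Hc eps S aR bR); last first.
    by apply/eqP => E; move: Hin; rewrite E (negbTE (vzero_notin Hc)).
  rewrite scaler0 subr0; apply: QD; first exact: QE.
  by apply: QZ; case: HC => ->; [|apply: QN]; apply: QE; rewrite Hin.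
case: ifP => Hz.
  move=> HC.
  have -> : emat eps S b *m emat eps S a *m emat eps S b = emat eps S b.
    have e : emat eps S a *m emat eps S b
        = emat eps S b *m emat eps S a - Hd c S b by rewrite -HC opprB addrC subrK.
    by rewrite -mulmxA e mulmxBr mulmxA (EEmul0 Hc eps S bR) mul0mx sub0r (E_H Hc eps S bR) opprK.
  rewrite HC; apply: QB; first apply: QD; first exact: QE.
    by apply: QZ; apply: QH.
  by apply: QZ; apply: QE.
move=> HC; rewrite HC.
rewrite (EAE0 Hc eps S aR bR); last by rewrite -(root_size Hc bR) Hz.
by rewrite !scaler0 subr0 addr0; apply: QE.
Qed.

Lemma QAdD c (Hc : case_ok c) (eps : signs c) (S : comPzRingType) b (t : S) d psi :
  b \in Phi c ->
  (forall i j, vsub (wt i) (wt j) \in Phi c -> d i - d j = psi (vsub (wt i) (wt j))) ->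
  Qm eps (Ad eps b t (Dg d)).
Proof.
move=> bR Hd'; rewrite Ad_expand.
have -> : emat eps S b *m Dg d *m emat eps S b = 0.
  apply/matrixP => i j; rewrite !mxE big1 // => l _.
  rewrite mulDg_r mulrAC (EE0 Hc eps S i l j bR) mul0r.
  by [].
have -> : emat eps S b *m Dg d - Dg d *m emat eps S b = (- psi b) *: emat eps S b.
  have -> : emat eps S b *m Dg d = \matrix_(i, j) (emat eps S b i j * d j).
    by apply/matrixP => i j; rewrite mulDg_r [RHS]mxE.
  have -> : Dg d *m emat eps S b = \matrix_(i, j) (d i * emat eps S b i j).
    by apply/matrixP => i j; rewrite mulDg_l [RHS]mxE.
  apply/matrixP => i j; rewrite !mxE.
  case: eqP => H; last by rewrite !mulr0 mul0r subr0.
  have e : vsub (wt i) (wt j) = b by apply/eqP; rewrite -(vsub_wt Hc i j bR) H.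
  have := Hd' i j; rewrite e => /(_ bR) <-.
  by ring.
rewrite scaler0 subr0; apply: QD; first by apply: QDg; exact: Hd'.
by apply: QZ; apply: QZ; apply: QE.
Qed.

Lemma QAd c (Hc : case_ok c) (eps : signs c) (Hch : chevalley_signs eps)
  (S : comPzRingType) b (t : S) (X : 'M[S]_(dimV c)) :
  b \in Phi c -> Qm eps X -> Qm eps (Ad eps b t X).
Proof.
move=> bR [cf [d [psi [Hd' ->]]]]; rewrite Ad_add; apply: QD; last first.
  exact: (QAdD Hc eps t bR Hd').
have : all (fun a => a \in Phi c) (undup (Phi c)) by apply/allP => a; rewrite mem_undup.
elim: (undup (Phi c)) => [|a l IH] /=; first by rewrite big_nil Ad0 => _; apply: Q0.
move=> /andP[aR Hl]; rewrite big_cons Ad_add Ad_scale; apply: QD.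
  by apply: QZ; apply: QAdE.
exact: IH.
Qed.

Lemma xroot_inv c (Hc : case_ok c) (eps : signs c) (S : comPzRingType) b (t : S) :
  b \in Phi c -> xroot eps b t *m xroot eps b (-t) = 1%:M.
Proof.
move=> bR; rewrite /xroot mulmxDl mul1mx mulmxDr mulmx1 -scalemxAl -scalemxAr.
rewrite (EEmul0 Hc eps S bR) !scaler0 addr0 scaleNr.
by rewrite addrAC -addrA subrr addr0.
Qed.

Lemma elem_Q c (Hc : case_ok c) (eps : signs c) (Hch : chevalley_signs eps)
  (S : comPzRingType) (h : 'M[S]_(dimV c)) : elem eps h ->
  exists hi, h *m hi = 1%:M /\ hi *m h = 1%:M /\
    forall X, Qm eps X -> Qm eps (h *m X *m hi).
Proof.
elim => [|g a xi _ [gi [H1 [H2 H3]]] aR].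
  by exists 1%:M; split; [rewrite mulmx1|split; [rewrite mulmx1|move=> X; rewrite mulmx1 mul1mx]].
exists (xroot eps a (-xi) *m gi); split.
  by rewrite -mulmxA (mulmxA (xroot eps a xi)) (xroot_inv Hc eps xi aR) mul1mx H1.
split.
  rewrite -mulmxA (mulmxA gi) H2 mul1mx.
  by have := xroot_inv Hc eps (-xi) aR; rewrite opprK.
move=> X HX.
have -> : g *m xroot eps a xi *m X *m (xroot eps a (- xi) *m gi)
   = g *m (Ad eps a xi X) *m gi by rewrite /Ad !mulmxA.
by apply: H3; apply: QAd.
Qed.

Lemma intr_sign (R : pzRingType) k : (((-1)^+k : int)%:~R : R) = (-1)^+k.
Proof. by rewrite rmorphXn rmorphN1. Qed.

Definition zsum n (l : seq (zpoly n)) : zpoly n := foldr (@ZAdd n) (ZConst n 0) l.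
Definition zprod n (l : seq (zpoly n)) : zpoly n := foldr (@ZMul n) (ZConst n 1) l.

Lemma zsum_eval n (R : pzRingType) (l : seq (zpoly n)) (g : 'M[R]_n) :
  zeval (zsum l) g = \sum_(f <- l) zeval f g.
Proof. by elim: l => [|f l IH]; rewrite ?big_nil ?big_cons //= IH. Qed.
Lemma zprod_eval n (R : pzRingType) (l : seq (zpoly n)) (g : 'M[R]_n) :
  zeval (zprod l) g = \prod_(f <- l) zeval f g.
Proof. by elim: l => [|f l IH]; rewrite ?big_nil ?big_cons //= IH. Qed.

Definition zdet m n (P : 'I_m -> 'I_m -> zpoly n) : zpoly n :=
  zsum [seq ZMul (ZConst n ((-1) ^+ s)) (zprod [seq P i (s i) | i <- index_enum 'I_m])
       | s : {perm 'I_m} <- index_enum {perm 'I_m}].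

Lemma zdet_eval m n (R : pzRingType) (P : 'I_m -> 'I_m -> zpoly n) (g : 'M[R]_n) :
  zeval (zdet P) g = \det (\matrix_(i, j) zeval (P i j) g).
Proof.
rewrite zsum_eval big_map /determinant; apply: eq_bigr => s _ /=.
rewrite intr_sign zprod_eval big_map; congr (_ * _).
by apply: eq_bigr => i _; rewrite mxE.
Qed.

Definition zcof n (i j : 'I_n) : zpoly n :=
  ZMul (ZConst n ((-1) ^+ (i + j))) (zdet (fun k l : 'I_n.-1 => ZVar (lift i k) (lift j l))).

Arguments zcof : simpl never.
Lemma zeval_mul n (R : pzRingType) (f1 f2 : zpoly n) (g : 'M[R]_n) :
  zeval (ZMul f1 f2) g = zeval f1 g * zeval f2 g.
Proof. by []. Qed.

Lemma zcof_eval n (R : pzRingType) (i j : 'I_n) (g : 'M[R]_n) :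
  zeval (zcof i j) g = cofactor g i j.
Proof.
rewrite /zcof /= zdet_eval intr_sign /cofactor; congr (_ * \det _).
by apply/matrixP => k l; rewrite !mxE.
Qed.

Definition zF c (eps : signs c) a (lam mu : 'I_(dimV c)) : zpoly (dimV c) :=
  zsum [seq ZMul (zsum [seq ZMul (ZVar lam l) (ZConst _ (emat eps int a l k))
                         | l <- index_enum 'I_(dimV c)]) (zcof mu k)
       | k <- index_enum 'I_(dimV c)].

Lemma zF_eval c (eps : signs c) (R : pzRingType) a lam mu (g : 'M[R]_(dimV c)) :
  zeval (zF eps a lam mu) g = (g *m emat eps R a *m \adj g) lam mu.
Proof.
rewrite zsum_eval big_map mxE; apply: eq_bigr => k _.
rewrite zeval_mul zsum_eval big_map zcof_eval [\adj g k mu]mxE mxE; congr (_ * _).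
apply: eq_bigr => l _ /=; congr (_ * _).
by rewrite (emat_map eps R a) [RHS]mxE.
Qed.

Definition lf c (S : pzRingType) (l : seq (int * 'I_(dimV c) * 'I_(dimV c)))
  (Y : 'M[S]_(dimV c)) : S := \sum_(x <- l) (x.1.1)%:~R * Y x.1.2 x.2.

Definition zlf c (l : seq (int * 'I_(dimV c) * 'I_(dimV c)))
  (f : 'I_(dimV c) -> 'I_(dimV c) -> zpoly (dimV c)) : zpoly (dimV c) :=
  zsum [seq ZMul (ZConst _ x.1.1) (f x.1.2 x.2) | x <- l].

Lemma zlf_eval c (S : pzRingType) l f (g : 'M[S]_(dimV c)) :
  zeval (zlf l f) g = \sum_(x <- l) (x.1.1)%:~R * zeval (f x.1.2 x.2) g.
Proof. by rewrite zsum_eval big_map. Qed.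

Lemma lf_scale c (S : comPzRingType) l k (Y : 'M[S]_(dimV c)) :
  lf l (k *: Y) = k * lf l Y.
Proof. rewrite /lf big_distrr; apply: eq_bigr => x _; by rewrite mxE mulrCA. Qed.

Lemma lf_add c (S : pzRingType) l (Y Z : 'M[S]_(dimV c)) :
  lf l (Y + Z) = lf l Y + lf l Z.
Proof. rewrite /lf -big_split; apply: eq_bigr => x _; by rewrite mxE mulrDr. Qed.

Lemma lf_one c (S : pzRingType) l : all (fun x => x.1.2 != x.2) l ->
  lf l (1%:M : 'M[S]_(dimV c)) = 0.
Proof.
move=> /allP H; rewrite /lf big1_seq // => x /andP[_ /H /negbTE E].
by rewrite mxE E mulr0.
Qed.

Lemma adj_inv (S : comPzRingType) n (h h' : 'M[S]_n) :
  h *m h' = 1%:M -> h' *m h = 1%:M -> \adj h = \det h *: h'.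
Proof.
move=> H1 H2.
by rewrite -[\adj h]mulmx1 -H1 mulmxA mul_adj_mx mul_scalar_mx.
Qed.

Lemma inv_adj (S : comPzRingType) n (h h' : 'M[S]_n) :
  h *m h' = 1%:M -> h' *m h = 1%:M -> h' = \det h' *: \adj h.
Proof.
move=> H1 H2; rewrite (adj_inv H1 H2) scalerA -det_mulmx H2 det1 scale1r //.
Qed.

Lemma key c (Hc : case_ok c) (eps : signs c) (Hch : chevalley_signs eps) a (aR : a \in Phi c)
  (l : seq (int * 'I_(dimV c) * 'I_(dimV c))) :
  all (fun x => x.1.2 != x.2) l ->
  (forall (S : comPzRingType) (Y : 'M[S]_(dimV c)), Qm eps Y -> lf l Y = 0) ->
  forall (R : comPzRingType) (g : 'M[R]_(dimV c)), root_type eps a g -> lf l g = 0.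
Proof.
move=> Hoff HQ R g [_ Hrt].
have E : zeval (zlf l (@ZVar _)) g = lf l g by rewrite zlf_eval.
rewrite -E; apply: Hrt => S h h' Gh hh' h'h; rewrite zlf_eval.
rewrite /xroot scale1r mulmxDr mulmx1 mulmxDl hh'.
have -> : \sum_(x <- l) (x.1.1)%:~R * zeval (ZVar x.1.2 x.2) (1%:M + h *m emat eps S a *m h')
        = lf l (1%:M + h *m emat eps S a *m h') by [].
rewrite lf_add lf_one // add0r (inv_adj hh' h'h) -scalemxAr lf_scale.
suff -> : lf l (h *m emat eps S a *m \adj h) = 0 by rewrite mulr0.
have E2 : zeval (zlf l (zF eps a)) h = lf l (h *m emat eps S a *m \adj h).
  by rewrite zlf_eval; apply: eq_bigr => x _; rewrite zF_eval.
rewrite -E2; apply: Gh.2 => S0 h0 Hel; rewrite zlf_eval.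
have [hi [H1 [H2 H3]]] := elem_Q Hc Hch Hel.
have -> : \sum_(x <- l) (x.1.1)%:~R * zeval (zF eps a x.1.2 x.2) h0
        = lf l (h0 *m emat eps S0 a *m \adj h0).
  by apply: eq_bigr => x _; rewrite zF_eval.
rewrite (adj_inv H1 H2) -scalemxAr lf_scale HQ ?mulr0 //.
by apply: H3; apply: QE.
Qed.

Lemma sum_if (S : pzRingType) (s : seq vec) (v : vec) (G F : vec -> S) : uniq s ->
  \sum_(a <- s) G a * (if v == a then F a else 0) = if v \in s then G v * F v else 0.
Proof.
elim: s => [|x s IH] /=; first by rewrite big_nil.
move=> /andP[xs us]; rewrite big_cons IH // inE.
case: eqP => [->|_] /=; last by rewrite mulr0 add0r.
by rewrite (negbTE xs) addr0.
Qed.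

Lemma Qentry c (Hc : case_ok c) (eps : signs c) (S : comPzRingType) (Y : 'M[S]_(dimV c)) :
  Qm eps Y -> exists cf : vec -> S,
   (forall i j, i != j -> vsub (wt i) (wt j) \notin Phi c -> Y i j = 0) /\
   (forall i j, vsub (wt i) (wt j) \in Phi c ->
      Y i j = (if eps (vsub (wt i) (wt j)) j then 1 else -1) * cf (vsub (wt i) (wt j))).
Proof.
move=> [cf [d [psi [_ ->]]]]; exists cf.
have HY : forall i j, (\sum_(a <- undup (Phi c)) cf a *: emat eps S a + Dg d) i j =
   \sum_(a <- undup (Phi c)) cf a * (if vsub (wt i) (wt j) == a then
        (if eps a j then 1 else -1) else 0) + (if i == j then d i else 0).
  move=> i j; rewrite mxE summxE; congr (_ + _); last by rewrite mxE.
  rewrite big_seq [RHS]big_seq; apply: eq_bigr => a; rewrite mem_undup => aR.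
  by rewrite !mxE (vsub_wt Hc i j aR).
split.
  move=> i j ij nR; rewrite HY sum_if ?undup_uniq // mem_undup (negbTE nR) (negbTE ij).
  by rewrite addr0.
move=> i j R; rewrite HY sum_if ?undup_uniq // mem_undup R.
have ij : i != j.
  apply/eqP => E; move: R; rewrite E vsub_self (wt_size Hc).
  by rewrite (negbTE (vzero_notin Hc)).
by rewrite (negbTE ij) addr0 mulrC.
Qed.

Lemma wdist_ne c (i j : 'I_(dimV c)) : (1 <= wdist i j)%N -> i != j.
Proof.
rewrite /wdist => H; have := before_find 0 H.
have n0 : (0 < dimV c)%N by apply: leq_ltn_trans (ltn_ord i).
by rewrite nth_iota //= => /negbT.
Qed.

Lemma wdist_one c (i j : 'I_(dimV c)) : wdist i j = 1%N -> i != j /\ wadj i j.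
Proof.
move=> H; have ij : i != j by apply: wdist_ne; rewrite H.
split => //.
have n1 : (1 < dimV c)%N.
  case: ltnP => // H1; exfalso; move/negP: ij; apply.
  apply/eqP/val_inj => /=; have := ltn_ord i; have := ltn_ord j; move: H1; lia.
have hs : has (fun k => within k i j) (iota 0 (dimV c)).
  by rewrite has_find; move: H; rewrite /wdist => ->; rewrite size_iota.
have := nth_find 0 hs; move: H; rewrite /wdist => ->; rewrite nth_iota //= (negbTE ij) /=.
by case/existsP => m /andP[/eqP <-].
Qed.

Lemma wdist_two c (i j : 'I_(dimV c)) : (2 <= wdist i j)%N -> i != j /\ ~~ wadj i j.
Proof.
move=> H; split; first by apply: wdist_ne; apply: leq_trans H.
have n1 : (1 < dimV c)%N.
  by apply: leq_trans H _; have := find_size (fun k => within k i j) (iota 0 (dimV c)); rewrite size_iota.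
have := before_find 0 H; rewrite nth_iota //= => /negbT; rewrite negb_or => /andP[_].
apply: contra => Ha; apply/existsP; exists i; by rewrite eqxx.
Qed.

Unset Implicit Arguments.
Set Strict Implicit.

Theorem mainTheorem15 (c : case) (eps : signs c) (a : vec) :
  case_ok c -> chevalley_signs eps -> a \in Phi c ->
  (forall (R : comPzRingType) (g : 'M[R]_(dimV c)), root_type eps a g ->
     forall lam mu : 'I_(dimV c), (2 <= wdist lam mu)%N -> g lam mu = 0)
  /\
  (exists s : 'I_(dimV c) -> 'I_(dimV c) -> 'I_(dimV c) -> 'I_(dimV c) -> bool,
     forall (R : comPzRingType) (g : 'M[R]_(dimV c)), root_type eps a g ->
     forall lam mu rho tau : 'I_(dimV c),
       wdist lam mu = 1%N -> wdist rho tau = 1%N ->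
       vsub (wt lam) (wt mu) = vsub (wt rho) (wt tau) ->
       g lam mu = (if s lam mu rho tau then 1 else -1) * g rho tau).
Proof.
move=> Hc Hch aR; split.
  move=> R g Hg lam mu H2; have [ne na] := wdist_two H2.
  have := key Hc Hch aR (l := [:: (1%:Z, lam, mu)]) _ _ Hg.
  rewrite /lf big_cons big_nil addr0 mul1r; apply => //=; first by rewrite ne.
  move=> S Y HY; rewrite /lf big_cons big_nil addr0.
  by have [cf [H0 _]] := Qentry Hc HY; rewrite H0 // mulr0.
exists (fun lam mu rho tau => eps (vsub (wt lam) (wt mu)) mu == eps (vsub (wt lam) (wt mu)) tau).
move=> R g Hg lam mu rho tau d1 d2 Heq.
have [ne1 bR] := wdist_one d1; have [ne2 _] := wdist_one d2.
rewrite /wadj in bR.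
set b := vsub (wt lam) (wt mu) in bR Heq *.
set sg : int := if eps b mu == eps b tau then 1 else -1.
have Hl : lf [:: (1%:Z, lam, mu); (- sg, rho, tau)] g = 0.
  apply: (key Hc Hch aR) Hg; first by rewrite /= ne1 ne2.
  move=> S Y HY; rewrite /lf !big_cons big_nil addr0 /=.
  have [cf [_ H1]] := Qentry Hc HY.
  rewrite (H1 _ _ bR) H1 -Heq // /sg.
  by case: (eps b mu); case: (eps b tau) => /=; rewrite ?rmorphN /=; ring.
move: Hl; rewrite /lf !big_cons big_nil addr0 mul1r /=.
have -> : ((- sg)%:~R : R) = - (if eps b mu == eps b tau then 1 else -1).
  by rewrite rmorphN /sg; case: (_ == _).
by rewrite mulNr => /eqP; rewrite subr_eq0 => /eqP.
Qed.
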